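(* (a) If $\mathbf s$ and $\mathbf s'$ are two different infinite supernatural numbers, then the ind-groups $\mathrm{GL}(\mathbf s)$ and $\mathrm{GL}(\mathbf s')$ are not isomorphic, and $\mathrm{SL}(\mathbf s)$ and $\mathrm{SL}(\mathbf s')$ are not isomorphic. (b) If $\mathbf s$ is an infinite supernatural number, then $\mathrm{GL}(\mathbf s)$ is not isomorphic to $\mathrm{GL}(\infty)$, and $\mathrm{SL}(\mathbf s)$ is not isomorphic to $\mathrm{SL}(\infty)$.
   Context: A supernatural number is a formal product $\mathbf s=\prod_{p\in\mathcal P}p^{\alpha_p}$ over a set $\mathcal P$ of primes with $\alpha_p\in\mathbb Z_{>0}\cup\{\infty\}$; it is infinite if some $\alpha_p=\infty$ or $\mathcal P$ is infinite. $\mathcal D(\mathbf s)$ is the set of its finite positive divisors. For positive integers $s\mid s'$, $\delta_{s,s'}:\mathrm{GL}(s)\to\mathrm{GL}(s')$ sends $x$ to $\mathrm{diag}(x,\dots,x)$ ($s'/s$ blocks). $\mathrm{GL}(\mathbf s)$ (resp. $\mathrm{SL}(\mathbf s)$) is the ind-group $\varinjlim_{s\in\mathcal D(\mathbf s)}\mathrm{GL}(s)$ (resp. $\varinjlim\mathrm{SL}(s)$) along the maps $\delta_{s,s'}$. $\mathrm{GL}(\infty)$ (resp. $\mathrm{SL}(\infty)$) is the ind-group $\varinjlim\mathrm{GL}(n)$ (resp. $\varinjlim\mathrm{SL}(n)$) along the standard embeddings $x\mapsto\begin{pmatrix}x&0\\0&1\end{pmatrix}$. Isomorphisms are isomorphisms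 of ind-groups. *)

(* Defs.v *)
From HB Require Import structures.
From mathcomp Require Import all_boot all_order all_algebra.
From mathcomp Require Import mpoly.
Set Implicit Arguments. Unset Strict Implicit. Unset Printing Implicit Defensive.
Import GRing.Theory.
Local Open Scope ring_scope.

(* exponent function on primes: [None] = infinity, [Some k] = exponent k
   ([Some 0] means the prime does not occur). Non-primes get exponent 0. *)
Record supernat := Supernat {
  snat_exp : nat -> option nat;
  snat_exp_nonprime : forall p, ~~ prime p -> snat_exp p = Some 0%N }.

Definition snat_infinite (s : supernat) : Prop :=
  (exists p, prime p /\ snat_exp s p = None) \/
  ~ (exists N, forall p, (N <= p)%N -> snat_exp s p = Some 0%N).

Definition snat_divisor (s : supernat) (n : nat) : Prop :=
  (0 < n)%N /\ forall p, prime p ->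
    if snat_exp s p is Some k then (logn p n <= k)%N else true.

Record dsys (F : fieldType) := DSys {
  ds_idx : nat -> Prop;                       (* allowed sizes *)
  ds_le : nat -> nat -> Prop;                 (* when an embedding m -> n exists *)
  ds_emb : forall m n, 'M[F]_m -> 'M[F]_n;
  ds_grp : forall n, 'M[F]_n -> bool }.       (* the group GL(n) / SL(n) in 'M_n *)

Arguments ds_emb {F} d m n _.
Arguments ds_grp {F} d {n} _.
Arguments ds_idx {F} d _.
Arguments ds_le {F} d _ _.

(* delta_{m,n}: A |-> diag(A,...,A) (n/m blocks) *)
Definition delta_emb (F : fieldType) (m n : nat) (A : 'M[F]_m) : 'M[F]_n :=
  \matrix_(i < n, j < n)
    \sum_(k < m) \sum_(l < m)
      A k l *+ [&& (i %% m == k)%N, (j %% m == l)%N & (i %/ m == j %/ m)%N].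

(* standard embedding x |-> [[x,0],[0,1]] *)
Definition std_emb (F : fieldType) (m n : nat) (A : 'M[F]_m) : 'M[F]_n :=
  \matrix_(i < n, j < n)
    ((\sum_(k < m) \sum_(l < m) A k l *+ ((i == k :> nat) && (j == l :> nat)))
     + ((m <= i)%N && (i == j :> nat))%:R).

Definition GLpred (F : fieldType) n (A : 'M[F]_n) : bool := A \in unitmx.
Definition SLpred (F : fieldType) n (A : 'M[F]_n) : bool := \det A == 1.

Definition GLs (F : fieldType) (s : supernat) : dsys F :=
  DSys (snat_divisor s) (fun m n => (m %| n)%N) (@delta_emb F) (@GLpred F).
Definition SLs (F : fieldType) (s : supernat) : dsys F :=
  DSys (snat_divisor s) (fun m n => (m %| n)%N) (@delta_emb F) (@SLpred F).
Definition GLinf (F : fieldType) : dsys F :=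
  DSys (fun n => (0 < n)%N) (fun m n => (m <= n)%N) (@std_emb F) (@GLpred F).
Definition SLinf (F : fieldType) : dsys F :=
  DSys (fun n => (0 < n)%N) (fun m n => (m <= n)%N) (@std_emb F) (@SLpred F).

(* equality in the direct limit of the classes of (m,A) and (n,B) *)
Definition ds_eqv (F : fieldType) (X : dsys F) m (A : 'M[F]_m) n (B : 'M[F]_n) :=
  exists k, [/\ ds_idx X k, ds_le X m k, ds_le X n k &
                ds_emb X m k A = ds_emb X n k B].

(* f : 'M_n -> 'M_m is a morphism of varieties on the subvariety {A | P A}
   of GL(n): each entry is a regular function, i.e. a polynomial in the
   matrix entries divided by a power of the determinant. *)
Definition regular_on (F : fieldType) n m (P : 'M[F]_n -> bool)
    (f : 'M[F]_n -> 'M[F]_m) : Prop :=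
  exists (e : nat) (Q : 'I_m -> 'I_m -> {mpoly F[n * n]}),
    forall A, P A -> forall i j,
      f A i j = (Q i j).@[fun l => mxvec A 0 l] / (\det A) ^+ e.

(* morphism of ind-groups X -> Y given on the filtration pieces:
   X_n is sent into Y_(t n) by a morphism of varieties, compatibly with the
   embeddings, and multiplicatively. *)
Definition is_ind_hom (F : fieldType) (X Y : dsys F) (t : nat -> nat)
    (f : forall n, 'M[F]_n -> 'M[F]_(t n)) : Prop :=
  forall n, ds_idx X n ->
  [/\ ds_idx Y (t n),
      forall A, ds_grp X A -> ds_grp Y (f n A),
      regular_on (@ds_grp F X n) (f n),
      forall A B, ds_grp X A -> ds_grp X B -> f n (A *m B) = f n A *m f n B &
      forall n' (A : 'M[F]_n), ds_idx X n' -> ds_le X n n' -> ds_grp X A ->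
        ds_eqv Y (f n' (ds_emb X n n' A)) (f n A)].

Definition ind_iso (F : fieldType) (X Y : dsys F) : Prop :=
  exists (t : nat -> nat) (f : forall n, 'M[F]_n -> 'M[F]_(t n))
         (t' : nat -> nat) (g : forall n, 'M[F]_n -> 'M[F]_(t' n)),
  [/\ is_ind_hom X Y f, is_ind_hom Y X g,
      (forall n (A : 'M[F]_n), ds_idx X n -> ds_grp X A ->
          ds_eqv X (g (t n) (f n A)) A) &
      (forall n (B : 'M[F]_n), ds_idx Y n -> ds_grp Y B ->
          ds_eqv Y (f (t' n) (g n B)) B)].

(* Main.v *)
Require Import Defs.
From mathcomp Require Import all_boot all_order all_algebra.
From mathcomp Require Import all_fingroup.
From Stdlib Require FunctionalExtensionality ProofIrrelevance Classical_Prop.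
Set Implicit Arguments. Unset Strict Implicit. Unset Printing Implicit Defensive.
Import GRing.Theory.
Local Open Scope ring_scope.

Section Emb.
Variable F : fieldType.

Lemma deltaE m n (A : 'M[F]_m.+1) (i j : 'I_n) :
  delta_emb n A i j =
  if (i %/ m.+1 == j %/ m.+1)%N then A (inord (i %% m.+1)) (inord (j %% m.+1)) else 0.
Proof.
have Hi : (i %% m.+1 < m.+1)%N by rewrite ltn_mod.
have Hj : (j %% m.+1 < m.+1)%N by rewrite ltn_mod.
rewrite mxE (bigD1 (inord (i %% m.+1))) //=. rewrite [X in _ + X]big1 ?addr0; last first.
  move=> k Hk; rewrite big1 // => l _.
  have -> : (i %% m.+1 == k)%N = false.
    apply/negP => /eqP E; move/negP: Hk; apply; apply/eqP/val_inj.
    by rewrite /= inordK.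
  by rewrite /= mulr0n.
rewrite (bigD1 (inord (j %% m.+1))) //=. rewrite [X in _ + X]big1 ?addr0; last first.
  move=> l Hl.
  have -> : (j %% m.+1 == l)%N = false.
    apply/negP => /eqP E; move/negP: Hl; apply; apply/eqP/val_inj.
    by rewrite /= inordK.
  by rewrite andbF /= mulr0n.
rewrite !inordK // !eqxx /=.
by case: ifP => _; rewrite ?mulr1n ?mulr0n.
Qed.



Lemma stdE m n (A : 'M[F]_m.+1) (i j : 'I_n) :
  std_emb n A i j =
  if (i < m.+1)%N && (j < m.+1)%N then A (inord i) (inord j) else ((i == j :> nat)%:R).
Proof.
rewrite mxE.
case: (ltnP i m.+1) => Hi /=; case: (ltnP j m.+1) => Hj /=.
- rewrite /= addr0.
  rewrite (bigD1 (inord i)) //= [X in _ + X]big1 ?addr0; last first.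
    move=> k Hk; rewrite big1 // => l _.
    have -> : (i == k :> nat) = false.
      apply/negP => /eqP E; move/negP: Hk; apply; apply/eqP/val_inj.
      by rewrite /= inordK.
    by rewrite /= mulr0n.
  rewrite (bigD1 (inord j)) //= [X in _ + X]big1 ?addr0; last first.
    move=> l Hl.
    have -> : (j == l :> nat) = false.
      apply/negP => /eqP E; move/negP: Hl; apply; apply/eqP/val_inj.
      by rewrite /= inordK.
    by rewrite andbF /= mulr0n.
  by rewrite !inordK // !eqxx /= mulr1n.
- rewrite big1 ?add0r; last first.
    move=> k _; rewrite big1 // => l _.
    have -> : (j == l :> nat) = false.
      by apply/negP=>/eqP E; move: (ltn_ord l); rewrite -E ltnNge Hj.
    by rewrite andbF.
  case: (@eqP _ (i : nat) j) => [Eij|_] //=.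
  by move: Hi Hj; rewrite Eij ltnNge => /negP.
- rewrite big1 ?add0r; last first.
    move=> k _; rewrite big1 // => l _.
    have -> : (i == k :> nat) = false.
      by apply/negP=>/eqP E; move: (ltn_ord k); rewrite -E ltnNge Hi.
    by [].
  by [].
- rewrite big1 ?add0r; last first.
    move=> k _; rewrite big1 // => l _.
    have -> : (i == k :> nat) = false.
      by apply/negP=>/eqP E; move: (ltn_ord k); rewrite -E ltnNge Hi.
    by [].
  by [].
Qed.


Lemma divS_m m a : ((m.+1 + a) %/ m.+1 = (a %/ m.+1).+1)%N.
Proof. by rewrite addnC -{1}[m.+1]mul1n divnDMl // addn1. Qed.

Lemma delta_block m q (A : 'M[F]_m.+1) :
  (delta_emb (q.+1 * m.+1) A : 'M_(m.+1 + q * m.+1)) =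
  block_mx A 0 0 (delta_emb (q * m.+1) A).
Proof.
apply/matrixP => i j.
rewrite deltaE.
case: (split_ordP i) => a ->; case: (split_ordP j) => b ->.
- rewrite block_mxEul /= !divn_small // !modn_small // !inord_val.
- by rewrite eqxx.
- rewrite (@block_mxEur _ m.+1 (q * m.+1) m.+1 (q * m.+1)) /= mxE divn_small // divS_m //.
- rewrite (@block_mxEdl _ m.+1 (q * m.+1) m.+1 (q * m.+1)) /= mxE (divn_small (ltn_ord b)) divS_m //.
- rewrite (@block_mxEdr _ m.+1 (q * m.+1) m.+1 (q * m.+1)) /= deltaE !divS_m eqSS !modnDl //.
Qed.


Lemma mx0_eq k (A B : 'M[F]_(0 * k)) : A = B.
Proof. apply/matrixP => -[i Hi] j. exfalso. by rewrite mul0n in Hi. Qed.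

Lemma delta_mul m q (A B : 'M[F]_m.+1) :
  delta_emb (q * m.+1) (A *m B) = delta_emb (q * m.+1) A *m delta_emb (q * m.+1) B.
Proof.
elim: q => [|q IH]; first exact: mx0_eq.
change ((delta_emb (q.+1 * m.+1) (A *m B) : 'M_(m.+1 + q * m.+1)) =
  (delta_emb (q.+1 * m.+1) A : 'M_(m.+1 + q * m.+1)) *m
  (delta_emb (q.+1 * m.+1) B : 'M_(m.+1 + q * m.+1))).
rewrite !delta_block mulmx_block IH !mulmx0 !mul0mx !addr0 !add0r //.
Qed.

Lemma delta_det m q (A : 'M[F]_m.+1) :
  \det (delta_emb (q * m.+1) A) = \det A ^+ q.
Proof.
elim: q => [|q IH]; first by rewrite expr0 det_mx00.
change (\det (delta_emb (q.+1 * m.+1) A : 'M_(m.+1 + q * m.+1)) = \det A ^+ q.+1).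
by rewrite delta_block det_ublock IH exprS.
Qed.

Lemma delta_scalar m q (a : F) :
  delta_emb (q * m.+1) (a%:M : 'M_m.+1) = a%:M.
Proof.
elim: q => [|q IH]; first exact: mx0_eq.
change ((delta_emb (q.+1 * m.+1) (a%:M : 'M_m.+1) : 'M_(m.+1 + q * m.+1)) = a%:M).
by rewrite delta_block IH scalar_mx_block.
Qed.

Lemma delta_inj m q (A B : 'M[F]_m.+1) :
  delta_emb (q.+1 * m.+1) A = delta_emb (q.+1 * m.+1) B -> A = B.
Proof.
change ((delta_emb (q.+1 * m.+1) A : 'M_(m.+1 + q * m.+1)) =
        (delta_emb (q.+1 * m.+1) B : 'M_(m.+1 + q * m.+1)) -> A = B).
by rewrite !delta_block => /eq_block_mx [].
Qed.

Lemma delta_id m (A : 'M[F]_m.+1) : delta_emb m.+1 A = A.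
Proof.
apply/matrixP => i j; rewrite deltaE !divn_small // eqxx !modn_small //.
by rewrite !inord_val.
Qed.


Lemma eq_divmod x y q : ((x %/ q == y %/ q) && (x %% q == y %% q))%N = (x == y).
Proof.
apply/idP/eqP => [/andP[/eqP a /eqP b]|->]; last by rewrite !eqxx.
by rewrite (divn_eq x q) a b -divn_eq.
Qed.

Lemma divmod_blocks i j m q :
  ((i %/ (q * m) == j %/ (q * m)) && ((i %% (q * m)) %/ m == (j %% (q * m)) %/ m))%N
  = (i %/ m == j %/ m)%N.
Proof.
rewrite -!modn_divl [(q * m)%N]mulnC !divnMA.
exact: eq_divmod.
Qed.

Lemma delta_comp m k1 k (A : 'M[F]_m.+1) :
  (m.+1 %| k1)%N -> (0 < k1)%N ->
  delta_emb k (delta_emb k1 A) = delta_emb k A.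
Proof.
case: k1 => // k1 Hd _; have [q Hq] := dvdnP Hd.
apply/matrixP => i j.
rewrite deltaE [in RHS]deltaE -(divmod_blocks i j m.+1 q) -Hq.
case: ifP => E1 //=.
rewrite deltaE !inordK ?ltn_mod //.
by rewrite -(modn_dvdm i Hd) -(modn_dvdm j Hd).
Qed.


Lemma std_block m r (A : 'M[F]_m.+1) :
  (std_emb (m.+1 + r) A : 'M_(m.+1 + r)) = block_mx A 0 0 1%:M.
Proof.
apply/matrixP => i j.
rewrite stdE.
case: (split_ordP i) => a ->; case: (split_ordP j) => b ->.
- by rewrite (@block_mxEul _ m.+1 r m.+1 r) /= !inord_val.
- rewrite /block_mx col_mxEu row_mxEr mxE /=.
  by rewrite eqn_leq [(m.+1 + b <= a)%N]leqNgt (leq_trans (ltn_ord a) (leq_addr _ _)) andbF.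
- rewrite /block_mx col_mxEd row_mxEl mxE /=.
  by rewrite eqn_leq [(m.+1 + a <= b)%N]leqNgt (leq_trans (ltn_ord b) (leq_addr _ _)).
- by rewrite /block_mx col_mxEd row_mxEr mxE /= eqn_add2l.
Qed.

Lemma std_mul m n (A B : 'M[F]_m.+1) : (m.+1 <= n)%N ->
  std_emb n (A *m B) = std_emb n A *m std_emb n B.
Proof.
move=> Hn; have [r ->] : exists r, n = (m.+1 + r)%N by exists (n - m.+1)%N; rewrite subnKC.
by rewrite !std_block mulmx_block !mulmx0 !mul0mx !addr0 !add0r mulmx1.
Qed.

Lemma std_inj m n (A B : 'M[F]_m.+1) : (m.+1 <= n)%N ->
  std_emb n A = std_emb n B -> A = B.
Proof.
move=> Hn; have [r ->] : exists r, n = (m.+1 + r)%N by exists (n - m.+1)%N; rewrite subnKC.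
by rewrite !std_block => /eq_block_mx [].
Qed.

Lemma std_id m (A : 'M[F]_m.+1) : std_emb m.+1 A = A.
Proof. by apply/matrixP => i j; rewrite stdE !ltn_ord /= !inord_val. Qed.

Lemma std_comp m k1 k (A : 'M[F]_m.+1) : (m.+1 <= k1)%N ->
  std_emb k (std_emb k1 A) = std_emb k A.
Proof.
case: k1 => // k1 Hk.
apply/matrixP => i j.
rewrite stdE [in RHS]stdE.
case: (ltnP i k1.+1) => Hi /=; case: (ltnP j k1.+1) => Hj /=.
- by rewrite stdE !inordK.
- case: ifP => //; case/andP => _ Hj'.
  by move: (leq_trans Hj' Hk); rewrite ltnNge Hj.
- case: ifP => //; case/andP => Hi' _.
  by move: (leq_trans Hi' Hk); rewrite ltnNge Hi.
- case: ifP => //; case/andP => Hi' _.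
  by move: (leq_trans Hi' Hk); rewrite ltnNge Hi.
Qed.

End Emb.

Section Generic.
Variable F : fieldType.

Definition good (X : dsys F) : Prop :=
[/\ forall a b, ds_idx X a -> ds_idx X b ->
      exists k, [/\ ds_idx X k, ds_le X a k & ds_le X b k],
    forall a (A : 'M[F]_a), ds_idx X a -> ds_le X a a /\ ds_emb X a a A = A,
    forall a b c (A : 'M[F]_a), ds_idx X a -> ds_idx X b -> ds_idx X c ->
      ds_le X a b -> ds_le X b c ->
      ds_le X a c /\ ds_emb X b c (ds_emb X a b A) = ds_emb X a c A,
    forall a b (A B : 'M[F]_a), ds_idx X a -> ds_idx X b -> ds_le X a b ->
      ds_emb X a b (A *m B) = ds_emb X a b A *m ds_emb X a b B &
    forall a b (A B : 'M[F]_a), ds_idx X a -> ds_idx X b -> ds_le X a b ->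
      ds_emb X a b A = ds_emb X a b B -> A = B].

Definition grpok (X : dsys F) : Prop :=
  forall n, ds_idx X n ->
  [/\ ds_grp X (1%:M : 'M[F]_n),
      forall A B : 'M[F]_n, ds_grp X A -> ds_grp X B -> ds_grp X (A *m B) &
      forall A : 'M[F]_n, ds_grp X A -> A \in unitmx].

Definition embgrp (X : dsys F) : Prop :=
  forall a b (A : 'M[F]_a), ds_idx X a -> ds_idx X b -> ds_le X a b ->
    ds_grp X A -> ds_grp X (ds_emb X a b A).

Lemma eqv_refl X a (A : 'M[F]_a) : good X -> ds_idx X a -> ds_eqv X A A.
Proof. by case=> _ G2 _ _ _ Ha; exists a; have [? ?] := G2 a A Ha; split. Qed.

Lemma eqv_sym X a b (A : 'M[F]_a) (B : 'M[F]_b) : ds_eqv X A B -> ds_eqv X B A.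
Proof. by case=> k [? ? ? ?]; exists k; split. Qed.

Lemma eqv_trans X a b c (A : 'M[F]_a) (B : 'M[F]_b) (C : 'M[F]_c) :
  good X -> ds_idx X a -> ds_idx X b -> ds_idx X c ->
  ds_eqv X A B -> ds_eqv X B C -> ds_eqv X A C.
Proof.
case=> G1 _ G3 _ _ Ha Hb Hc [k1 [Hk1 Hak1 Hbk1 E1]] [k2 [Hk2 Hbk2 Hck2 E2]].
have [k [Hk Hk1k Hk2k]] := G1 _ _ Hk1 Hk2.
exists k; split => //.
- by have [] := G3 _ _ _ A Ha Hk1 Hk Hak1 Hk1k.
- by have [] := G3 _ _ _ C Hc Hk2 Hk Hck2 Hk2k.
have [_ <-] := G3 _ _ _ A Ha Hk1 Hk Hak1 Hk1k.
have [_ <-] := G3 _ _ _ C Hc Hk2 Hk Hck2 Hk2k.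
rewrite E1 -E2.
have [_ ->] := G3 _ _ _ B Hb Hk1 Hk Hbk1 Hk1k.
by have [_ ->] := G3 _ _ _ B Hb Hk2 Hk Hbk2 Hk2k.
Qed.

Lemma eqv_comm X a b (W1 W2 : 'M[F]_a) (U1 U2 : 'M[F]_b) :
  good X -> ds_idx X a -> ds_idx X b ->
  ds_eqv X W1 U1 -> ds_eqv X W2 U2 -> U1 *m U2 = U2 *m U1 ->
  W1 *m W2 = W2 *m W1.
Proof.
move=> GX; case: (GX) => G1 _ G3 G4 G5 Ha Hb
  [k1 [Hk1 Hak1 Hbk1 E1]] [k2 [Hk2 Hak2 Hbk2 E2]] HU.
have [k [Hk Hk1k Hk2k]] := G1 _ _ Hk1 Hk2.
have [Hak _] := G3 _ _ _ W1 Ha Hk1 Hk Hak1 Hk1k.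
have [Hbk _] := G3 _ _ _ U1 Hb Hk1 Hk Hbk1 Hk1k.
have e1 : ds_emb X a k W1 = ds_emb X b k U1.
  have [_ <-] := G3 _ _ _ W1 Ha Hk1 Hk Hak1 Hk1k.
  have [_ <-] := G3 _ _ _ U1 Hb Hk1 Hk Hbk1 Hk1k.
  by rewrite E1.
have e2 : ds_emb X a k W2 = ds_emb X b k U2.
  have [_ <-] := G3 _ _ _ W2 Ha Hk2 Hk Hak2 Hk2k.
  have [_ <-] := G3 _ _ _ U2 Hb Hk2 Hk Hbk2 Hk2k.
  by rewrite E2.
apply: (G5 _ _ _ _ Ha Hk Hak).
by rewrite !G4 // e1 e2 -!G4 // HU.
Qed.

Lemma hom_one X Y t (f : forall n, 'M[F]_n -> 'M[F]_(t n)) n :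
  grpok X -> grpok Y -> is_ind_hom X Y f -> ds_idx X n ->
  f n 1%:M = 1%:M.
Proof.
move=> OX OY Hf Hn.
have [Ht Hg _ Hm _] := Hf n Hn.
have [H1 _ _] := OX n Hn.
have [_ _ Hu] := OY _ Ht.
have U := Hu _ (Hg _ H1).
have E : f n 1%:M = f n 1%:M *m f n 1%:M by rewrite -Hm // mulmx1.
by rewrite -[LHS](mulKmx U) -E mulVmx.
Qed.

Lemma central X Y t (f : forall n, 'M[F]_n -> 'M[F]_(t n))
  t' (g : forall n, 'M[F]_n -> 'M[F]_(t' n)) :
  good X -> good Y -> grpok X -> grpok Y -> embgrp X ->
  is_ind_hom X Y f -> is_ind_hom Y X g ->
  (forall n (B : 'M[F]_n), ds_idx Y n -> ds_grp Y B -> ds_eqv Y (f (t' n) (g n B)) B) ->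
  forall n (z : 'M[F]_n), ds_idx X n -> ds_grp X z ->
  (forall k (U : 'M[F]_k), ds_idx X k -> ds_le X n k ->
     ds_emb X n k z *m U = U *m ds_emb X n k z) ->
  forall M (W C : 'M[F]_M), ds_idx Y M -> ds_grp Y C -> ds_eqv Y W (f n z) ->
  W *m C = C *m W.
Proof.
move=> GX GY OX OY EX Hf Hg Hfg n z Hn Hz Hcz M W C HM HC HW.
have [HL Hgg _ _ _] := Hg M HM.
have Hu := Hgg C HC.
set L := t' M in HL Hu *.
set u := g M C in Hu *.
have HC' := Hfg M C HM HC.
case: (GX) => G1 _ _ _ _.
have [K [HK HnK HLK]] := G1 _ _ Hn HL.
have [Htn _ _ _ Hcn] := Hf n Hn.
have [HtL _ _ _ HcL] := Hf L HL.
have [HtK _ _ HmK _] := Hf K HK.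
have E1 := Hcn K z HK HnK Hz.
have E2 := HcL K u HK HLK Hu.
have gz := EX _ _ z Hn HK HnK Hz.
have gu := EX _ _ u HL HK HLK Hu.
apply: (eqv_comm GY HM HtK).
- exact: (eqv_trans GY HM Htn HtK HW (eqv_sym E1)).
- exact: (eqv_trans GY HM HtL HtK (eqv_sym HC') (eqv_sym E2)).
by rewrite -!HmK // Hcz.
Qed.

End Generic.

Section Inst.
Variable F : fieldType.

Lemma div_lcm s a b : snat_divisor s a -> snat_divisor s b -> snat_divisor s (lcmn a b).
Proof.
case=> Ha Hpa [Hb Hpb]; split; first by rewrite lcmn_gt0 Ha Hb.
move=> p Pp; have := Hpa p Pp; have := Hpb p Pp.
by case: (snat_exp s p) => // k; rewrite logn_lcm // geq_max => -> ->.
Qed.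

Lemma div_dvd s a b : snat_divisor s b -> (a %| b)%N -> (0 < a)%N -> snat_divisor s a.
Proof.
case=> Hb Hpb Hab Ha; split => // p Pp; have := Hpb p Pp.
case: (snat_exp s p) => // k; apply: leq_trans; exact: dvdn_leq_log.
Qed.

Definition Xs (P : forall n, 'M[F]_n -> bool) s :=
  DSys (snat_divisor s) (fun m n => (m %| n)%N) (@delta_emb F) P.
Definition Xinf (P : forall n, 'M[F]_n -> bool) :=
  DSys (fun n => (0 < n)%N) (fun m n => (m <= n)%N) (@std_emb F) P.

Lemma good_Xs P s : good (Xs P s).
Proof.
split => /=.
- move=> a b Ha Hb; exists (lcmn a b); split; [exact: div_lcm|exact: dvdn_lcml|exact: dvdn_lcmr].
- move=> [|a] A [] // _ _; split => //; exact: delta_id.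
- move=> [|a] b c A [] // _ _ Hb _ Hab Hbc; split; first exact: dvdn_trans Hab Hbc.
  by apply: delta_comp => //; case: Hb.
- move=> [|a] b A B [] // _ _ _ /dvdnP [q ->]; exact: delta_mul.
- move=> [|a] b A B [] // _ _ [Hb _] /dvdnP [q Hq]; move: Hb; rewrite Hq.
  case: q Hq => // q _ _; exact: delta_inj.
Qed.

Lemma good_Xinf P : good (Xinf P).
Proof.
split => /=.
- move=> a b Ha Hb; exists (maxn a b); split; [by rewrite leq_max Ha|exact: leq_maxl|exact: leq_maxr].
- move=> [|a] A // _; split => //; exact: std_id.
- move=> [|a] b c A // _ Hb _ Hab Hbc; split; first exact: leq_trans Hab Hbc.
  exact: std_comp.
- move=> [|a] b A B // _ _ Hab; exact: std_mul.
- move=> [|a] b A B // _ _ Hab; exact: std_inj.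
Qed.

Lemma grpok_GL (X : dsys F) : (forall n (A : 'M[F]_n), ds_grp X A = GLpred A) -> grpok X.
Proof.
move=> E n _; rewrite !E /GLpred; split; first exact: unitmx1.
- by move=> A B; rewrite !E /GLpred => HA HB; rewrite unitmx_mul HA.
- by move=> A; rewrite E.
Qed.

Lemma grpok_SL (X : dsys F) : (forall n (A : 'M[F]_n), ds_grp X A = SLpred A) -> grpok X.
Proof.
move=> E n _; rewrite !E /SLpred; split; first by rewrite det1.
- by move=> A B; rewrite !E /SLpred => /eqP HA /eqP HB; rewrite det_mulmx HA HB mulr1.
- by move=> A; rewrite E /SLpred unitmxE => /eqP ->; exact: unitr1.
Qed.

Lemma embgrp_GL s : embgrp (Xs (@GLpred F) s).
Proof.
rewrite /embgrp /=.
move=> [|n1] n2 A; first by case.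
move=> _ _ /dvdnP [q ->].
rewrite /GLpred !unitmxE delta_det; exact: unitrX.
Qed.

Lemma embgrp_SL s : embgrp (Xs (@SLpred F) s).
Proof.
rewrite /embgrp /=.
move=> [|n1] n2 A; first by case.
move=> _ _ /dvdnP [q ->].
by rewrite /SLpred delta_det => /eqP ->; rewrite expr1n.
Qed.

End Inst.

Section Mx.
Variable F : fieldType.

Lemma mulmx_deltaE n (W : 'M[F]_n) (i j a b : 'I_n) :
  (W *m delta_mx i j) a b = W a i * (j == b)%:R.
Proof.
rewrite mxE (bigD1 i) //= mxE eqxx /= big1 ?addr0 ?(eq_sym b j) // => l /negPf Hl.
by rewrite mxE Hl mulr0.
Qed.

Lemma delta_mulmxE n (W : 'M[F]_n) (i j a b : 'I_n) :
  (delta_mx i j *m W) a b = (a == i)%:R * W j b.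
Proof.
rewrite mxE (bigD1 j) //= mxE eqxx andbT big1 ?addr0 // => l /negPf Hl.
by rewrite mxE Hl andbF mul0r.
Qed.

Lemma trans_comm N (W : 'M[F]_N.+1) :
  (forall i j : 'I_N.+1, i != j ->
     W *m (1%:M + delta_mx i j) = (1%:M + delta_mx i j) *m W) ->
  W = (W 0 0)%:M.
Proof.
move=> H.
have key : forall i j : 'I_N.+1, i != j -> forall a b,
    W a i * (j == b)%:R = (a == i)%:R * W j b.
  move=> i j Hij a b; rewrite -mulmx_deltaE -delta_mulmxE.
  have := H i j Hij; rewrite mulmxDr mulmxDl mulmx1 mul1mx => /addrI ->.
  by [].
apply/matrixP => a b; rewrite mxE.
case: (eqVneq a b) => [<-|Hab].
  case: (eqVneq a 0) => [->|Ha0]; first by rewrite mulr1n.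
  have := key a 0 Ha0 a 0; rewrite !eqxx mulr1 mul1r => ->.
  by rewrite mulr1n.
have Hba : b != a by rewrite eq_sym.
have := key b a Hba a a.
by rewrite eqxx mulr1 (negPf Hab) mul0r mulr0n.
Qed.

Lemma det_trans_lt N (i j : 'I_N) : (j < i)%N -> \det (1%:M + delta_mx i j : 'M[F]_N) = 1.
Proof.
move=> Hji.
rewrite det_trig.
  rewrite big1 // => a _; rewrite !mxE eqxx /=.
  case: (eqVneq a i) => [Ea|]; last by rewrite andFb addr0.
  have -> : (a == j) = false by apply/negP => /eqP Eb; move: Hji; rewrite -Ea -Eb ltnn.
  by rewrite addr0.
apply/is_trig_mxP => a b Hab; rewrite !mxE.
have -> : (a == b) = false by apply/negP => /eqP E; move: Hab; rewrite E ltnn.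
case: (eqVneq a i) => [Ea|]; last by rewrite andFb addr0.
case: (eqVneq b j) => [Eb|]; last by rewrite andbF addr0.
by move: Hab; rewrite Ea Eb ltnNge (ltnW Hji).
Qed.

Lemma det_trans N (i j : 'I_N) : i != j -> \det (1%:M + delta_mx i j : 'M[F]_N) = 1.
Proof.
move=> Hij; case: (ltngtP i j) => H.
- rewrite -det_tr linearD /= trmx1 trmx_delta; exact: det_trans_lt.
- exact: det_trans_lt.
- by move: Hij; rewrite -(inj_eq val_inj) /= H eqxx.
Qed.

Lemma scal_eq1 k (b : F) : (0 < k)%N -> (b%:M : 'M[F]_k) = 1%:M -> b = 1.
Proof.
case: k => // k _ /matrixP /(_ ord0 ord0); rewrite !mxE eqxx !mulr1n //.
Qed.

Lemma inf_one N (W0 : 'M[F]_N.+1) :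
  (forall i j : 'I_N.+2, i != j ->
     std_emb N.+2 W0 *m (1%:M + delta_mx i j) = (1%:M + delta_mx i j) *m std_emb N.+2 W0) ->
  W0 = 1%:M.
Proof.
move=> H; have E := trans_comm H.
have Emax : std_emb N.+2 W0 ord_max ord_max = 1.
  by rewrite stdE /= ltnn /= eqxx.
set a0 := std_emb N.+2 W0 0 0 in E.
have E00 : a0 = 1.
  by have := congr1 (fun M : 'M[F]_N.+2 => M ord_max ord_max) E; rewrite /= Emax mxE eqxx mulr1n.
rewrite E00 in E.
apply/matrixP => a b.
have := congr1 (fun M : 'M[F]_N.+2 => M (widen_ord (leqnSn _) a) (widen_ord (leqnSn _) b)) E.
rewrite stdE /= !ltn_ord /= !inord_val !mxE => ->.
by [].
Qed.

Lemma PD_exists n (c : F) : (0 < n)%N -> c ^+ n = 1 ->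
  exists Pm Dm : 'M[F]_n,
    [/\ Pm \in unitmx, Dm \in unitmx & Pm *m Dm = c%:M *m (Dm *m Pm)].
Proof.
move=> Hn Hc.
have c0 : c != 0.
  by apply/eqP => c0; move: Hc; rewrite c0 expr0n; case: n Hn => // n _ /eqP; rewrite eq_sym oner_eq0.
pose s := perm (@ordS_inj n).
exists (perm_mx s), (diag_mx (\row_(i < n) c ^+ i)); split.
- exact: unitmx_perm.
- rewrite unitmxE det_diag unitfE; apply/prodf_neq0 => i _; rewrite mxE; exact: expf_neq0.
rewrite mul_scalar_mx mul_diag_mx -row_permE.
apply/matrixP => i j; rewrite !mxE permE /=.
case: (ordS i == j); last by rewrite mulr0n mulr0 mulr0.
by rewrite mulr1n mulr1 expr_mod // exprS.
Qed.

End Mx.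

Lemma root_exists (F : closedFieldType) (hF : [pchar F]%R =i pred0) p k :
  prime p -> exists c : F, c ^+ (p ^ k.+1) = 1 /\ c ^+ (p ^ k) != 1.
Proof.
move=> Pp.
have p2 : (1 < p)%N := prime_gt1 Pp.
have [c1 [Hc1 Hc1']] : exists c1 : F, c1 ^+ p = 1 /\ c1 != 1.
  have pp : (0 < p.-1)%N by rewrite -ltnS prednK // ltnW.
  have [x Hx] := @solve_monicpoly F p.-1 (fun _ => -1) pp.
  have S0 : \sum_(i < p) x ^+ i = 0.
    rewrite -(prednK (ltnW p2)) big_ord_recr /= Hx -big_split /=.
    by apply: big1 => i _; rewrite mulN1r addrN.
  exists x; split.
    by apply/eqP; rewrite -subr_eq0 subrX1 S0 mulr0.
  apply/eqP => x1; move: S0; rewrite x1.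
  under eq_bigr do rewrite expr1n.
  rewrite sumr_const card_ord => /eqP.
  by move/pcharf0P: (hF) => ->; move/eqP => p0; rewrite p0 in p2.
have pk : (0 < (p ^ k)%N)%N by rewrite expn_gt0 prime_gt0.
have [c Hc] := @solve_monicpoly F (p ^ k)%N (fun i => if i == 0%N then c1 else 0) pk.
have Hc2 : c ^+ (p ^ k)%N = c1.
  rewrite Hc (bigD1 (Ordinal pk)) //= expr0 mulr1 big1 ?addr0 // => i Hi.
  case: (@eqP _ (i : nat) 0%N) => [E|]; last by rewrite mul0r.
  by exfalso; move/negP: Hi; apply; apply/eqP/val_inj; rewrite /= E.
exists c; split; last by rewrite Hc2.
by rewrite expnSr exprM Hc2.
Qed.

Section Core.
Variable F : fieldType.
Implicit Type P : forall n, 'M[F]_n -> bool.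

Lemma delta_scalar' m k (a : F) : (0 < m)%N -> (m %| k)%N ->
  delta_emb k (a%:M : 'M_m) = a%:M.
Proof. by case: m => // m _ /dvdnP [q ->]; exact: delta_scalar. Qed.

Lemma eqv_scal_Xs P s a n (b : F) : (0 < a)%N -> (0 < n)%N ->
  ds_eqv (Xs P s) (1%:M : 'M_a) (b%:M : 'M_n) -> b = 1.
Proof.
move=> Ha Hn [K [[HK _] /= HaK HnK]]; rewrite !delta_scalar' // => E.
by apply: (scal_eq1 HK); rewrite -E.
Qed.

Lemma scalar_of_comm P N (W : 'M[F]_N) : (0 < N)%N ->
  (forall i j : 'I_N, i != j -> W *m (1%:M + delta_mx i j) = (1%:M + delta_mx i j) *m W) ->
  exists a, W = a%:M.
Proof. by case: N W => // N W _ H; exists (W 0 0); exact: trans_comm. Qed.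

Lemma parta_core P s s' p k (c : F) :
  (forall s, grpok (Xs P s)) -> (forall s, embgrp (Xs P s)) ->
  (forall n (b : F), (0 < n)%N -> b ^+ n = 1 -> P n (b%:M)) ->
  (forall N (i j : 'I_N), i != j -> P N (1%:M + delta_mx i j)) ->
  (forall t (f : forall n, 'M[F]_n -> 'M[F]_(t n)), is_ind_hom (Xs P s) (Xs P s') f ->
     forall n, snat_divisor s n -> forall b : F, b ^+ n = 1 -> \det (f n b%:M) = 1) ->
  ind_iso (Xs P s) (Xs P s') -> prime p -> snat_divisor s (p ^ k.+1) ->
  c ^+ (p ^ k.+1) = 1 -> c ^+ (p ^ k) != 1 ->
  exists N, snat_divisor s' N /\ (p ^ k.+1 %| N)%N.
Proof.
move=> HO HE HP1 HPt Hdet [t [f [t' [g [Hf Hg Hgf Hfg]]]]] Pp Hn Hc1 Hc2.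
set n := (p ^ k.+1)%N in Hn Hc1 *.
have n0 : (0 < n)%N by rewrite expn_gt0 prime_gt0.
have GX := good_Xs P s; have GY := good_Xs P s'.
have OX := HO s; have OY := HO s'; have EX := HE s.
pose z : 'M[F]_n := c%:M.
have Hz : P n z by exact: HP1.
have Hcz : forall K (U : 'M[F]_K), ds_idx (Xs P s) K -> ds_le (Xs P s) n K ->
    ds_emb (Xs P s) n K z *m U = U *m ds_emb (Xs P s) n K z.
  by move=> K U _ /= HnK; rewrite delta_scalar' // scalar_mxC.
have [HN Hfg' _ Hfm Hfc] := Hf n Hn.
set N := t n in HN Hfg' Hfm Hfc *.
have HNp : (0 < N)%N by case: HN.
have HW := central GX GY OX OY EX Hf Hg Hfg Hn Hz Hcz.
have [a Ea] : exists a, f n z = a%:M.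
  apply: (scalar_of_comm P HNp) => i j Hij.
  apply: (HW N _ _ HN (HPt _ _ _ Hij)).
  exact: eqv_refl.
have Hpow : forall j, f n ((c ^+ j)%:M) = (a ^+ j)%:M.
  elim => [|j IH]; first by rewrite !expr0 (hom_one OX OY Hf Hn).
  rewrite !exprS !scalar_mxM Hfm.
  - by rewrite -/z Ea IH.
  - exact: Hz.
  by apply: HP1 => //; rewrite exprAC Hc1 expr1n.
have Ha1 : a ^+ n = 1.
  by apply: (@scal_eq1 _ N) => //; rewrite -Hpow Hc1 (hom_one OX OY Hf Hn).
have Ha2 : a ^+ (p ^ k) != 1.
  apply/eqP => Ha.
  have Hz' : P n ((c ^+ (p ^ k))%:M).
    by apply: HP1 => //; rewrite exprAC Hc1 expr1n.
  have := Hgf n _ Hn Hz'.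
  rewrite Hpow Ha (hom_one OY OX Hg HN) => E.
  have [HM _ _ _ _] := Hg N HN.
  move/eqP: Hc2; apply.
  by apply: (eqv_scal_Xs _ _ E) => //; case: HM.
have Hd : a ^+ N = 1.
  by rewrite -det_scalar -Ea; apply: (Hdet t f Hf n Hn c Hc1).
have [m Hprim Hmn] := prim_order_exists n0 Ha1.
have HmN : (m %| N)%N by rewrite (prim_order_dvd Hprim) Hd.
exists N; split => //.
case/(dvdn_pfactor _ _ Pp): Hmn => j Hj Em.
case: (ltngtP j k.+1) => Hjk.
- exfalso; move/eqP: Ha2; apply.
  apply/eqP; rewrite -(prim_order_dvd Hprim) Em; exact: dvdn_exp2l.
- by move: Hj; rewrite leqNgt Hjk.
- by rewrite /n -Hjk -Em.
Qed.

End Core.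

Section Core2.
Variable F : fieldType.
Implicit Type P : forall n, 'M[F]_n -> bool.

Lemma eqv_std Q N (W0 : 'M[F]_N) : (0 < N)%N ->
  ds_eqv (Xinf Q) (std_emb N.+1 W0) W0.
Proof.
case: N W0 => // N W0 _; exists N.+2; split => //=.
by rewrite std_id.
Qed.

Lemma inf_one' N (W0 : 'M[F]_N) : (0 < N)%N ->
  (forall i j : 'I_N.+1, i != j ->
     std_emb N.+1 W0 *m (1%:M + delta_mx i j) = (1%:M + delta_mx i j) *m std_emb N.+1 W0) ->
  W0 = 1%:M.
Proof. by case: N W0 => // N W0 _; exact: inf_one. Qed.

Lemma partb_core P Q s p (c : F) :
  grpok (Xs P s) -> embgrp (Xs P s) -> grpok (Xinf Q) ->
  (forall n (b : F), (0 < n)%N -> b ^+ n = 1 -> P n (b%:M)) ->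
  (forall N (i j : 'I_N), i != j -> Q N (1%:M + delta_mx i j)) ->
  snat_divisor s p -> c ^+ p = 1 -> c != 1 ->
  ~ ind_iso (Xs P s) (Xinf Q).
Proof.
move=> OX EX OY HP1 HQt Hn Hc1 Hc2 [t [f [t' [g [Hf Hg Hgf Hfg]]]]].
have n0 : (0 < p)%N by case: Hn.
have GX := good_Xs P s; have GY := good_Xinf Q.
pose z : 'M[F]_p := c%:M.
have Hz : P p z by exact: HP1.
have Hcz : forall K (U : 'M[F]_K), ds_idx (Xs P s) K -> ds_le (Xs P s) p K ->
    ds_emb (Xs P s) p K z *m U = U *m ds_emb (Xs P s) p K z.
  by move=> K U _ /= HnK; rewrite delta_scalar' // scalar_mxC.
have [HN _ _ _ _] := Hf p Hn.
have HW := central GX GY OX OY EX Hf Hg Hfg Hn Hz Hcz.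
have E1 : f p z = 1%:M.
  apply: (inf_one' HN) => i j Hij.
  apply: (HW (t p).+1) => //; first exact: HQt.
  exact: eqv_std.
have := Hgf p _ Hn Hz.
rewrite E1 (hom_one OY OX Hg HN) => E.
have [HM _ _ _ _] := Hg _ HN.
move/eqP: Hc2; apply.
by rewrite /z in E; apply: (eqv_scal_Xs _ _ E) => //; case: HM.
Qed.

Lemma grp_GL_scal n (b : F) : (0 < n)%N -> b ^+ n = 1 -> GLpred (b%:M : 'M[F]_n).
Proof. by move=> _ Hb; rewrite /GLpred unitmxE det_scalar Hb unitr1. Qed.
Lemma grp_SL_scal n (b : F) : (0 < n)%N -> b ^+ n = 1 -> SLpred (b%:M : 'M[F]_n).
Proof. by move=> _ Hb; rewrite /SLpred det_scalar Hb. Qed.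
Lemma grp_GL_trans N (i j : 'I_N) : i != j -> GLpred (1%:M + delta_mx i j : 'M[F]_N).
Proof. by move=> H; rewrite /GLpred unitmxE det_trans // unitr1. Qed.
Lemma grp_SL_trans N (i j : 'I_N) : i != j -> SLpred (1%:M + delta_mx i j : 'M[F]_N).
Proof. by move=> H; rewrite /SLpred det_trans. Qed.

Lemma det_SL s s' t (f : forall n, 'M[F]_n -> 'M[F]_(t n)) :
  is_ind_hom (Xs (@SLpred F) s) (Xs (@SLpred F) s') f ->
  forall n, snat_divisor s n -> forall b : F, b ^+ n = 1 -> \det (f n b%:M) = 1.
Proof.
move=> Hf n Hn b Hb; have [_ Hg _ _ _] := Hf n Hn.
by apply/eqP; apply: Hg; apply: grp_SL_scal => //; case: Hn.
Qed.

Lemma det_GL s s' t (f : forall n, 'M[F]_n -> 'M[F]_(t n)) :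
  is_ind_hom (Xs (@GLpred F) s) (Xs (@GLpred F) s') f ->
  forall n, snat_divisor s n -> forall b : F, b ^+ n = 1 -> \det (f n b%:M) = 1.
Proof.
move=> Hf n Hn b Hb; have [_ Hg _ Hm _] := Hf n Hn.
have n0 : (0 < n)%N by case: Hn.
have [Pm [Dm [HP HD E]]] := PD_exists n0 Hb.
have Hz : GLpred (b%:M : 'M[F]_n) by exact: grp_GL_scal.
have HDP : GLpred (Dm *m Pm) by rewrite /GLpred unitmx_mul HD HP.
have := congr1 (f n) E.
rewrite Hm // Hm // Hm // => /(congr1 determinant).
rewrite !det_mulmx.
have uP : \det (f n Pm) \is a GRing.unit by rewrite -unitmxE; exact: Hg.
have uD : \det (f n Dm) \is a GRing.unit by rewrite -unitmxE; exact: Hg.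
rewrite [\det (f n Dm) * _]mulrC -{1}[\det (f n Pm) * _]mul1r => /mulIr.
by move=> H; rewrite H // unitrM uP uD.
Qed.

End Core2.

Lemma iso_sym (F : fieldType) (X Y : dsys F) : ind_iso X Y -> ind_iso Y X.
Proof.
by case=> t [f [t' [g [Hf Hg H1 H2]]]]; exists t', g, t, f; split.
Qed.

Lemma div_ppow s p j : prime p ->
  (if snat_exp s p is Some k then (j <= k)%N else true) -> snat_divisor s (p ^ j).
Proof.
move=> Pp H; split; first by rewrite expn_gt0 prime_gt0.
move=> q Pq; rewrite lognX logn_prime //.
case: (eqVneq q p) => [->|Hqp]; last by case: (snat_exp s q) => // k; rewrite muln0.
by rewrite muln1.
Qed.

Lemma snat_ext s s' : (forall p, prime p -> snat_exp s p = snat_exp s' p) -> s = s'.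
Proof.
case: s s' => e He [e' He'] /= H.
have E : e = e'.
  apply: FunctionalExtensionality.functional_extensionality => p.
  case Pp: (prime p); first exact: H.
  by rewrite He ?He' ?Pp.
subst e'; f_equal; exact: ProofIrrelevance.proof_irrelevance.
Qed.

Section Final.
Variable F : closedFieldType.
Hypothesis hF : [pchar F]%R =i pred0.
Variable P : forall n, 'M[F]_n -> bool.
Hypothesis HO : forall s, grpok (Xs P s).
Hypothesis HE : forall s, embgrp (Xs P s).
Hypothesis HP1 : forall n (b : F), (0 < n)%N -> b ^+ n = 1 -> @P n (b%:M).
Hypothesis HPt : forall N (i j : 'I_N), i != j -> @P N (1%:M + delta_mx i j).
Hypothesis Hdet : forall s s' t (f : forall n, 'M[F]_n -> 'M[F]_(t n)),
  is_ind_hom (Xs P s) (Xs P s') f ->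
  forall n, snat_divisor s n -> forall b : F, b ^+ n = 1 -> \det (f n b%:M) = 1.

Lemma exps_le s s' p k : ind_iso (Xs P s) (Xs P s') -> prime p ->
  snat_divisor s (p ^ k.+1) ->
  if snat_exp s' p is Some k' then (k.+1 <= k')%N else true.
Proof.
move=> Hiso Pp Hd.
have [c [Hc1 Hc2]] := root_exists hF k Pp.
have [N [[N0 HNp] Hdv]] := parta_core HO HE HP1 HPt (@Hdet s s') Hiso Pp Hd Hc1 Hc2.
have := HNp p Pp; case: (snat_exp s' p) => // k' Hle.
by rewrite pfactor_dvdn // in Hdv; exact: leq_trans Hdv Hle.
Qed.

Lemma neq_iso s s' : s <> s' -> ~ ind_iso (Xs P s) (Xs P s').
Proof.
move=> Hne Hiso; have Hiso' := iso_sym Hiso; apply: Hne; apply: snat_ext => p Pp.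
have L1 : forall k, snat_exp s p = Some k ->
    (if snat_exp s' p is Some k' then (k.+1 <= k')%N else true) -> False.
  move=> k e Hd.
  have := exps_le Hiso' Pp (@div_ppow _ _ k.+1 Pp Hd).
  by rewrite e ltnn.
have L2 : forall k, snat_exp s' p = Some k ->
    (if snat_exp s p is Some k' then (k.+1 <= k')%N else true) -> False.
  move=> k e Hd.
  have := exps_le Hiso Pp (@div_ppow _ _ k.+1 Pp Hd).
  by rewrite e ltnn.
case e: (snat_exp s p) => [k|]; case e': (snat_exp s' p) => [k'|] //.
- case: (ltngtP k k') => Hk; last by rewrite Hk.
  + by exfalso; apply: (L1 k e); rewrite e'.
  + by exfalso; apply: (L2 k' e'); rewrite e.
- by exfalso; apply: (L1 k e); rewrite e'.
- by exfalso; apply: (L2 k' e'); rewrite e.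
Qed.

End Final.

Lemma inf_prime s : snat_infinite s -> exists p, prime p /\ snat_divisor s p.
Proof.
move=> Hinf.
case: (Classical_Prop.classic (exists p, prime p /\ snat_exp s p <> Some 0%N)).
  case=> p [Pp Hp]; exists p; split => //; rewrite -[p]expn1; apply: div_ppow => //.
  by case: (snat_exp s p) Hp => [[|k]|].
move=> Hno; case: Hinf => [[p [Pp Hp]]|Hfin].
  exists p; split => //; rewrite -[p]expn1; apply: div_ppow => //; by rewrite Hp.
exfalso; apply: Hfin; exists 0%N => p _.
case Pp: (prime p); last by rewrite snat_exp_nonprime ?Pp.
case: (eqVneq (snat_exp s p) (Some 0%N)) => // Hp.
by exfalso; apply: Hno; exists p; split => //; apply/eqP.
Qed.

Local Close Scope ring_scope.
Unset Implicit Arguments.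

Theorem proposition2p5 (F : closedFieldType) (hF : [pchar F]%R =i pred0) :
  (forall s s' : supernat, snat_infinite s -> snat_infinite s' -> s <> s' ->
     ~ ind_iso (GLs F s) (GLs F s') /\ ~ ind_iso (SLs F s) (SLs F s')) /\
  (forall s : supernat, snat_infinite s ->
     ~ ind_iso (GLs F s) (GLinf F) /\ ~ ind_iso (SLs F s) (SLinf F)).
Proof.
split.
  move=> s s' _ _ Hne; split.
  - apply: (@neq_iso F hF (@GLpred F)) => //.
    + by move=> s0; apply: grpok_GL.
    + exact: embgrp_GL.
    + exact: grp_GL_scal.
    + exact: grp_GL_trans.
    + exact: det_GL.
  - apply: (@neq_iso F hF (@SLpred F)) => //.
    + by move=> s0; apply: grpok_SL.
    + exact: embgrp_SL.
    + exact: grp_SL_scal.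
    + exact: grp_SL_trans.
    + exact: det_SL.
move=> s Hinf; have [p [Pp Hp]] := inf_prime Hinf.
have [c [Hc1 Hc2]] := root_exists hF 0 Pp.
rewrite expn1 expn0 expr1 in Hc1 Hc2.
split.
- apply: (@partb_core F (@GLpred F) (@GLpred F) s p c) => //.
  + by apply: grpok_GL.
  + exact: embgrp_GL.
  + by apply: grpok_GL.
  + exact: grp_GL_scal.
  + exact: grp_GL_trans.
- apply: (@partb_core F (@SLpred F) (@SLpred F) s p c) => //.
  + by apply: grpok_SL.
  + exact: embgrp_SL.
  + by apply: grpok_SL.
  + exact: grp_SL_scal.
  + exact: grp_SL_trans.
Qed.
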